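(* For all integers $N\ge1$ and $\ell\ge1$, the linear map $\partial^\phi_{<N}:\operatorname{gr}^F_\ell(\mathcal B)_N\to\bigoplus_{r\ge1,\ 3\le2r+1\le N}\operatorname{gr}^F_{\ell-1}(\mathcal B)_{N-2r-1}$, $\ w\mapsto\sum_{r}(\phi\otimes\mathrm{id})\big(\partial^{(\ell)}_{2r+1}(w)\big)$, is an isomorphism of $\mathbb Q$-vector spaces.
   Context: $\mathcal X=\{x_0,x_1\}$, $\mathbb Q\langle\mathcal X\rangle$ free noncommutative polynomials graded by weight (number of letters). $\mathcal B$ is the span of all concatenations of $x_0x_1$ and $x_0x_0x_1$; the level of such a word is the number of blocks $x_0x_0x_1$; $F_\ell\mathcal B$ = span of words of level $\le\ell$; $\operatorname{gr}^F_\ell(\mathcal B)_N=(F_\ell\mathcal B)_N/(F_{\ell-1}\mathcal B)_N$, identified with the span of words of weight $N$ and level exactly $\ell$. For letters: $I(x_1;f;x_0)=f$, $I(x_0;f;x_1)=S(f)$ with $S(\varepsilon_1\cdots\varepsilon_m)=(-1)^m\varepsilon_m\cdots\varepsilon_1$, $I(\varepsilon;f;\varepsilon)$ = coefficient of $\mathbf1$ in $f$ times $\mathbf1$. For a word $w=\varepsilon_1\cdots\varepsilon_N$, $\partial_{2r+1}(w)=\sum_{j=0}^{N-2r-1}I(\varepsilon_j;\varepsilon_{j+1}\cdots\varepsilon_{j+2r+1};\varepsilon_{j+2r+2})\otimes\varepsilon_1\cdots\varepsilon_j\varepsilon_{j+2r+2}\cdots\varepsilon_N$ ($\varepsilon_0=x_1,\varepsilon_{N+1}=x_0$).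 For $w$ of level $\ell$, $\partial^{(\ell)}_{2r+1}(w)$ is $\partial_{2r+1}(w)$ with all summands whose right factor has level $\ne\ell-1$ discarded; its left factors lie in $\mathcal B^1=\operatorname{span}\{(x_0x_1)^ax_0x_0x_1(x_0x_1)^b,\ (x_0x_1)^nx_0: a,b,n\ge0\}$. $\phi:\mathcal B^1\to\mathbb Q$ is linear with $\phi((x_0x_1)^ax_0x_0x_1(x_0x_1)^b)=c^{a+b+1}_{a,b}$ and $\phi((x_0x_1)^nx_0)=2(-1)^n$, where $c^r_{a,b}=2(-1)^r\big(\binom{2r}{2b+2}-(1-2^{-2r})\binom{2r}{2a+1}\big)$; $\phi\otimes\mathrm{id}$ is followed by the identification $\mathbb Q\otimes V=V$. *)

(* Defs.v *)
From mathcomp Require Import all_boot all_order all_algebra.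
Set Implicit Arguments. Unset Strict Implicit. Unset Printing Implicit Defensive.
Import Order.TTheory GRing.Theory Num.Theory.
Local Open Scope ring_scope.

(* Letters: x0 = false, x1 = true.  Words in X = {x0,x1} are [seq bool];
   the weight of a word is its size.  An element of Q<X> is represented by
   its coefficient function [word -> rat]. *)
Definition x0 : bool := false.
Definition x1 : bool := true.
Definition word := seq bool.

(* Level of a word of B: a word lies in B iff it is a concatenation of the
   blocks x0x1 and x0x0x1; this decomposition is unique, and [levelB w] parses
   it, returning [Some (number of x0x0x1 blocks)] if w lies in B, and [None]
   otherwise. *)
Fixpoint levelB (w : word) : option nat :=
  match w with
  | [::] => Some 0%N
  | false :: true :: rest => levelB rest
  | false :: false :: true :: rest => omap S (levelB rest)
  | _ => None
  end.

Definition inB_level (w : word) (l : nat) : bool := levelB w == Some l.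

Definition pow01 (n : nat) : word := flatten (nseq n [:: x0; x1]).

Definition cc (r a b : nat) : rat :=
  2 * (-1) ^+ r *
  ('C(2 * r, 2 * b + 2)%N%:R - (1 - (2%:R ^- (2 * r)%N)) * 'C(2 * r, 2 * a + 1)%N%:R).

(* phi on words: the prescribed values on the basis words of B^1,
   and 0 on all other words. *)
Definition phi (w : word) : rat :=
  \sum_(a < (size w).+1) \sum_(b < (size w).+1)
     (w == pow01 a ++ [:: x0; x0; x1] ++ pow01 b)%:R * cc (a + b + 1)%N a b
  + \sum_(n < (size w).+1) (w == pow01 n ++ [:: x0])%:R * (2 * (-1) ^+ n).

Definition phiI (a : bool) (f : word) (b : bool) : rat :=
  if (a == x1) && (b == x0) then phi f
  else if (a == x0) && (b == x1) then (-1) ^+ size f * phi (rev f)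
  else (f == [::])%:R * phi [::].

(* Coefficient of  (phi (x) id)(∂^{(l)}_{2r+1}(w))  on the word u, for w of
   level l: sum over j = 0 .. N-2r-1 (N = size w), with eps_0 = x1,
   eps_{N+1} = x0, keeping only summands whose right factor has level l-1. *)
Definition dcoef (l r : nat) (w u : word) : rat :=
  let N := size w in
  let e := x1 :: w ++ [:: x0] in
  \sum_(j < N.+1 | (j + 2 * r + 1 <= N)%N)
    let rf := take j w ++ drop (j + 2 * r + 1)%N w in
    ((rf == u) && inB_level rf l.-1)%:R *
    phiI (nth x0 e j) (take (2 * r + 1)%N (drop j w)) (nth x0 e (j + 2 * r + 2)%N).

Definition in_gr (N l : nat) (v : word -> rat) : Prop :=
  forall w, v w != 0 -> size w = N /\ inB_level w l.

Definition in_target (N l : nat) (g : nat -> word -> rat) : Prop :=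
  forall r u, g r u != 0 ->
    [/\ 1 <= r, 2 * r + 1 <= N, size u = N - (2 * r + 1) & inB_level u l.-1]%N.

Definition dphi (N l : nat) (v : word -> rat) : nat -> word -> rat :=
  fun r u => if ((1 <= r) && (2 * r + 1 <= N))%N then
               \sum_(t : N.-tuple bool) v t * dcoef l r t u
             else 0.

(* f is a bijection from the subspace P onto the subspace Q
   (f is linear by construction) *)
Definition bij_on {A B : Type} (P : A -> Prop) (Q : B -> Prop) (f : A -> B) : Prop :=
  [/\ forall v, P v -> Q (f v),
      forall v1 v2, P v1 -> P v2 -> f v1 = f v2 -> v1 = v2
    & forall g, Q g -> exists2 v, P v & f v = g].

(* Main.v *)
Require Import Defs.
From mathcomp Require Import all_boot all_order all_algebra.
From mathcomp Require Import ring lra zify.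
From Stdlib Require Classical_Prop FunctionalExtensionality.
Set Implicit Arguments. Unset Strict Implicit. Unset Printing Implicit Defensive.
Import Order.TTheory GRing.Theory Num.Theory.

Module Part1.
Local Open Scope ring_scope.

Definition Zb (x : rat) (b : bool) : Prop :=
  exists (m e : int), x * (2 * e%:~R + 1) = (b%:Z + 2 * m)%:~R.

Lemma Zb_uniq x b1 b2 : Zb x b1 -> Zb x b2 -> b1 = b2.
Proof.
case=> m1 [e1 H1] [m2 [e2 H2]].
have : ((b1%:Z + 2 * m1) * (2 * e2 + 1))%:~R = ((b2%:Z + 2 * m2) * (2 * e1 + 1))%:~R :> rat.
  rewrite !rmorphM /= -H1 -H2 !rmorphD /= !rmorphM /=; ring.
move/eqP; rewrite eqr_int => /eqP H.
clear H1 H2; move: H; case: b1; case: b2 => /= H //; exfalso; lia.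
Qed.

Lemma Zb_intE (b : bool) (m : int) : Zb (b%:Z + 2 * m)%:~R b.
Proof. by exists m, 0; rewrite mulr0 add0r mulr1. Qed.

Lemma Zb0 : Zb 0 false.
Proof. by have := Zb_intE false 0; rewrite /= mulr0 addr0. Qed.

Lemma Zb1 : Zb 1 true.
Proof. by have := Zb_intE true 0; rewrite /= mulr0 addr0. Qed.

Lemma Zb_add x y b1 b2 : Zb x b1 -> Zb y b2 -> Zb (x + y) (b1 (+) b2).
Proof.
case=> m1 [e1 H1] [m2 [e2 H2]].
exists (b1%:Z * e2 + m1 * (2 * e2 + 1) + b2%:Z * e1 + m2 * (2 * e1 + 1) + (b1 && b2)%:Z).
exists (2 * e1 * e2 + e1 + e2).
have E : (x + y) * (2 * (2 * e1 * e2 + e1 + e2)%:~R + 1) =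
   x * (2 * e1%:~R + 1) * (2 * e2%:~R + 1) + y * (2 * e2%:~R + 1) * (2 * e1%:~R + 1).
  rewrite !rmorphD !rmorphM /=; ring.
rewrite E H1 H2; clear E H1 H2.
case: b1; case: b2; rewrite /= !rmorphD !rmorphM /=; ring.
Qed.

Lemma Zb_mul x y b1 b2 : Zb x b1 -> Zb y b2 -> Zb (x * y) (b1 && b2).
Proof.
case=> m1 [e1 H1] [m2 [e2 H2]].
exists (b1%:Z * m2 + m1 * b2%:Z + 2 * m1 * m2).
exists (2 * e1 * e2 + e1 + e2).
have E : (x * y) * (2 * (2 * e1 * e2 + e1 + e2)%:~R + 1) =
   x * (2 * e1%:~R + 1) * (y * (2 * e2%:~R + 1)).
  rewrite !rmorphD !rmorphM /=; ring.
rewrite E H1 H2; clear E H1 H2.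
case: b1; case: b2; rewrite /= !rmorphD !rmorphM /=; ring.
Qed.

Lemma Zb_opp x b : Zb x b -> Zb (- x) b.
Proof.
case=> m [e H]; exists (- m - b%:Z), e.
rewrite mulNr H; clear H; case: b; rewrite /= !rmorphD ?rmorphN /=; ring.
Qed.

Lemma Zb_sub x y b1 b2 : Zb x b1 -> Zb y b2 -> Zb (x - y) (b1 (+) b2).
Proof. by move=> h1 h2; apply: Zb_add h1 (Zb_opp h2). Qed.

Lemma Zb_nat (n : nat) : Zb n%:R (odd n).
Proof.
have := Zb_intE (odd n) (n./2)%:Z.
have -> : ((odd n)%:Z + 2 * (n./2)%:Z) = n%:Z.
  by rewrite -[in RHS](odd_double_half n) -muln2 PoszD PoszM; ring.
by [].
Qed.

Lemma Zb_int_ex (m : int) : exists b, Zb m%:~R b.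
Proof.
case: m => n; first by exists (odd n); exact: Zb_nat.
exists (odd n.+1); rewrite NegzE rmorphN /=; apply: Zb_opp; exact: Zb_nat.
Qed.

Lemma Zb_divodd (m e : int) b : Zb m%:~R b -> Zb (m%:~R / (2 * e%:~R + 1)) b.
Proof.
case=> m1 [e1 H]; exists m1, (2 * e * e1 + e + e1).
have nz : (2 * e%:~R + 1 : rat) != 0.
  apply/eqP => h. have : ((2 * e + 1)%:~R : rat) = 0 by rewrite rmorphD rmorphM /= h.
  move/eqP; rewrite intr_eq0 => /eqP; lia.
rewrite -H.
have -> : (2 * (2 * e * e1 + e + e1)%:~R + 1 : rat) = (2 * e%:~R + 1) * (2 * e1%:~R + 1).
  rewrite !rmorphD !rmorphM /=; ring.
by rewrite mulrA mulfVK.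
Qed.

Lemma Zb_sum (I : Type) (r : seq I) (P : pred I) (F : I -> rat) :
  (forall i, P i -> Zb (F i) false) -> Zb (\sum_(i <- r | P i) F i) false.
Proof.
move=> H; elim/big_rec: _ => [|i x Pi Hx]; first exact: Zb0.
by have := Zb_add (H i Pi) Hx.
Qed.

Lemma Zb_bool (b : bool) : Zb (b%:R) b.
Proof. by have := Zb_nat b; case: b. Qed.

Lemma Zb_even_mul x y b : Zb x false -> Zb y b -> Zb (x * y) false.
Proof. by move=> h1 h2; have := Zb_mul h1 h2. Qed.

Lemma Zb_mul_even x y b : Zb x b -> Zb y false -> Zb (x * y) false.
Proof. by move=> h1 h2; have := Zb_mul h1 h2; rewrite andbF. Qed.

Lemma Zb_sign n : Zb ((-1) ^+ n) true.
Proof.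
elim: n => [|n IH]; first by rewrite expr0; exact: Zb1.
by rewrite exprS mulN1r; apply: Zb_opp.
Qed.

End Part1.
Import Part1.

Module Part2.
Local Open Scope ring_scope.

Lemma two_adic (r : nat) : (0 < r)%N -> exists k d, odd d /\ r = (2 ^ k * d)%N.
Proof.
elim: r {-2}r (leqnn r) => [|n IH] r Hr r0; first by lia.
case Od: (odd r); first by exists 0%N, r; rewrite expn0 mul1n.
have H := odd_double_half r; rewrite Od add0n -muln2 in H.
have [k [d [Hd E]]] := IH r./2 ltac:(lia) ltac:(lia).
exists k.+1, d; split => //.
by rewrite -H E expnS mulnC mulnA.
Qed.

Lemma Zb_pow2r (r : nat) : (0 < r)%N -> Zb (2 ^+ (2 * r - 1)%N / r%:R) false.
Proof.
move=> r0; have [k [d [Hd E]]] := two_adic r0.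
have kr : (k < r)%N.
  have : (2 ^ k <= r)%N by rewrite E leq_pmulr //; case: d Hd E.
  move=> h; have h2 := ltn_expl r (ltnSn 1).
  by rewrite -(ltn_exp2l _ _ (ltnSn 1)); apply: leq_ltn_trans h h2.
exists (2%:Z ^+ (2 * r - 2 - k)), (d./2)%:Z.
have -> : (2 * (d./2)%:Z%:~R + 1 : rat) = d%:R.
  by rewrite -[in RHS](odd_double_half d) Hd -muln2 natrD natrM /=; ring.
rewrite [in X in _ / X]E natrM natrX.
have -> : (2 * r - 1 = (2 * r - 2 - k).+1 + k)%N by lia.
have d0 : (d%:R : rat) != 0 by rewrite pnatr_eq0; case: (d) Hd.
have p0 : ((2:rat) ^+ k) != 0 by rewrite expf_eq0 andbC...
rewrite exprD invfM mulrA mulfK // mulfVK // exprS /=.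
by rewrite /= add0r rmorphM rmorphXn /=.
Qed.

Definition sc (r : nat) : rat := 2 ^+ (2 * r - 2)%N / r%:R.

Lemma sc_cc r a b : (0 < r)%N -> sc r * cc r a b =
  2 ^+ (2 * r - 1)%N / r%:R * ((-1) ^+ r * ('C(2 * r, 2 * b + 2)%N%:R - 'C(2 * r, 2 * a + 1)%N%:R))
  + (-1) ^+ r * ('C(2 * r, 2 * a + 1)%N%:R / (2 * r)%N%:R).
Proof.
move=> r0; rewrite /sc /cc.
have -> : (2 ^+ (2 * r - 1)%N : rat) = 2 * 2 ^+ (2 * r - 2)%N.
  by rewrite -exprS; congr (_ ^+ _); lia.
have -> : (2%:R ^- (2 * r)%N : rat) = (4 * 2 ^+ (2 * r - 2)%N)^-1.
  by congr (_^-1); rewrite -[4]/(2 ^+ 2 : rat) -exprD; congr (_ ^+ _); lia.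
have p0 : ((2:rat) ^+ (2 * r - 2)%N) != 0 by rewrite expf_eq0 andbC.
have rr : (r%:R : rat) != 0 by rewrite pnatr_eq0 -lt0n.
rewrite natrM; field; rewrite p0 rr /=; done.
Qed.

Lemma Zb_C2 r a : (0 < r)%N -> Zb ('C(2 * r, 2 * a + 1)%N%:R / (2 * r)%N%:R) (odd 'C(2 * r - 1, 2 * a)).
Proof.
move=> r0.
have E := mul_bin_diag (2 * r) (2 * a).
rewrite -subn1 in E; rewrite addn1.
have -> : ('C(2 * r, (2 * a).+1)%N%:R / (2 * r)%N%:R : rat) = 'C(2 * r - 1, 2 * a)%N%:R / (2 * a).+1%:R.
  have h1 : ((2 * r)%N%:R : rat) != 0 by rewrite pnatr_eq0 muln_eq0 -lt0n r0.
  have h2 : ((2 * a).+1%:R : rat) != 0 by rewrite pnatr_eq0.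
  by apply/eqP; rewrite eqr_div // -!natrM mulnC [X in _ == X%:R]mulnC E.
have -> : ((2 * a).+1%:R : rat) = 2 * a%:~R + 1 by rewrite -addn1 natrD natrM mulr1n.
have := @Zb_divodd ('C(2 * r - 1, 2 * a))%:Z a _ (Zb_nat _).
by [].
Qed.

Lemma Zb_intnat_even (n : nat) x : Zb x false -> Zb (x * n%:R) false.
Proof. by move=> h; apply: Zb_even_mul h (Zb_nat n). Qed.

Lemma Zb_scc r a b : (0 < r)%N -> exists bb, Zb (sc r * cc r a b) bb.
Proof.
move=> r0; rewrite sc_cc //.
eexists; apply: Zb_add; last first.
  apply: Zb_mul; [exact: Zb_sign | exact: Zb_C2].
apply: Zb_even_mul (Zb_pow2r r0) _.
apply: Zb_mul (Zb_sign _) _; apply: Zb_sub; exact: Zb_nat.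
Qed.

Lemma Zb_scc_diag r : (0 < r)%N -> Zb (sc r * cc r (r - 1) 0) true.
Proof.
move=> r0; rewrite sc_cc //.
have -> : true = false (+) (true && odd 'C(2 * r - 1, 2 * (r - 1))).
  have -> : (2 * r - 1 = (2 * (r - 1)).+1)%N by lia.
  by rewrite binSn /= oddM.
apply: Zb_add; last first.
  apply: Zb_mul; [exact: Zb_sign | exact: Zb_C2].
apply: Zb_even_mul (Zb_pow2r r0) _.
apply: Zb_mul (Zb_sign _) _; apply: Zb_sub; exact: Zb_nat.
Qed.

Lemma Zb_scc_pair r x y : (x + y + 1 = r)%N -> Zb (sc r * (cc r x y - cc r y x)) false.
Proof.
move=> E; have r0 : (0 < r)%N by lia.
rewrite mulrBr !sc_cc //.
have -> : 'C(2 * r, 2 * y + 1) = 'C(2 * r, 2 * x + 1).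
  have -> : (2 * y + 1 = 2 * r - (2 * x + 1))%N by lia.
  by rewrite bin_sub //; lia.
have -> : 'C(2 * r, 2 * y + 2) = 'C(2 * r, 2 * x).
  have -> : (2 * y + 2 = 2 * r - 2 * x)%N by lia.
  by rewrite bin_sub //; lia.
set A := (_ / _ : rat); set B := (_ / _ : rat).
have -> : A * ((-1) ^+ r * ('C(2 * r, 2 * x)%:R - 'C(2 * r, 2 * x + 1)%:R)) + (-1) ^+ r * B -
    (A * ((-1) ^+ r * ('C(2 * r, 2 * x + 2)%:R - 'C(2 * r, 2 * x + 1)%:R)) + (-1) ^+ r * B)
  = A * ((-1) ^+ r * ('C(2 * r, 2 * x)%:R - 'C(2 * r, 2 * x + 2)%:R)) by ring.
apply: Zb_even_mul (Zb_pow2r r0) _.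
apply: Zb_mul (Zb_sign _) _; apply: Zb_sub; exact: Zb_nat.
Qed.

Lemma Zb_sc2 r n : (0 < r)%N -> Zb (sc r * (2 * (-1) ^+ n)) false.
Proof.
move=> r0; have -> : sc r * (2 * (-1) ^+ n) = 2 ^+ (2 * r - 1)%N / r%:R * (-1) ^+ n.
  rewrite /sc.
  have -> : (2 ^+ (2 * r - 1)%N : rat) = 2 * 2 ^+ (2 * r - 2)%N.
    by rewrite -exprS; congr (_ ^+ _); lia.
  ring.
exact: Zb_even_mul (Zb_pow2r r0) (Zb_sign n).
Qed.

End Part2.
Import Part2.

Module Part3.

Definition Pw (x y : nat) : word := pow01 x ++ [:: x0; x0; x1] ++ pow01 y.
Definition qw (n : nat) : word := flatten (nseq n [:: x1; x0]).

Fixpoint lead (w : word) : nat :=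
  match w with
  | false :: true :: t => (lead t).+1
  | _ => 0%N
  end.

Lemma pow01S n : pow01 n.+1 = x0 :: x1 :: pow01 n.
Proof. by []. Qed.

Lemma qwS n : qw n.+1 = x1 :: x0 :: qw n.
Proof. by []. Qed.

Lemma size_pow01 n : size (pow01 n) = (2 * n)%N.
Proof. by elim: n => // n IH; rewrite pow01S /= IH; lia. Qed.

Lemma size_Pw x y : size (Pw x y) = (2 * x + 2 * y + 3)%N.
Proof. by rewrite /Pw !size_cat !size_pow01 /=; lia. Qed.

Lemma lead_Pw x y u : lead (Pw x y ++ u) = x.
Proof. elim: x => [|x IH] //; rewrite /Pw in IH *; by rewrite pow01S /= IH. Qed.

Lemma Pw_inj a b x y : Pw a b = Pw x y -> a = x /\ b = y.
Proof.
move=> E; have ax : a = x by rewrite -(lead_Pw a b [::]) -(lead_Pw x y [::]) !cats0 E.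
split => //; subst a.
have := size_Pw x b; rewrite E size_Pw; lia.
Qed.

Lemma qw_rcons n : qw n ++ [:: x1; x0] = x1 :: x0 :: qw n.
Proof. by elim: n => // n IH; rewrite qwS /= IH. Qed.

Lemma rev_pow01 n : rev (pow01 n) = qw n.
Proof.
elim: n => // n IH; rewrite pow01S.
by rewrite -[x0 :: _]/([:: x0; x1] ++ pow01 n) rev_cat IH /= qw_rcons.
Qed.

Lemma rev_qw n : rev (qw n) = pow01 n.
Proof. by rewrite -rev_pow01 revK. Qed.

Lemma cons1_pow01 n : x1 :: pow01 n = qw n ++ [:: x1].
Proof. by elim: n => // n IH; rewrite pow01S qwS /= -IH. Qed.

Definition Qw (x y : nat) : word := qw x ++ [:: x1; x0; x0] ++ qw y.

Lemma rev_Pw x y : rev (Pw y x) = Qw x y.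
Proof.
by rewrite /Pw /Qw !rev_cat !rev_pow01 -catA.
Qed.

Lemma cons1_Pw x y : x1 :: Pw x y = Qw x y ++ [:: x1].
Proof.
by rewrite /Pw /Qw -cat_cons cons1_pow01 -!catA /= cons1_pow01.
Qed.

Lemma head_Qw x y : Qw x y = x1 :: behead (Qw x y).
Proof. by case: x. Qed.

Lemma Pw_rcons x y : Pw x y = behead (Qw x y) ++ [:: x1].
Proof.
have := cons1_Pw x y; rewrite [in X in _ = X ++ _]head_Qw /=.
by case.
Qed.

Local Open Scope ring_scope.

Lemma phiE w : phi w =
  (\sum_(a < (size w).+1) \sum_(b < (size w).+1) (w == Pw a b)%:R * cc (a + b + 1)%N a b)%R
  + (\sum_(n < (size w).+1) (w == pow01 n ++ [:: x0])%:R * (2 * (-1) ^+ n))%R.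
Proof. by []. Qed.

Definition phic (w : word) : rat :=
  \sum_(a < (size w).+1) \sum_(b < (size w).+1) (w == Pw a b)%:R * cc (a + b + 1)%N a b.
Definition phid (w : word) : rat :=
  \sum_(n < (size w).+1) (w == pow01 n ++ [:: x0])%:R * (2 * (-1) ^+ n).

Lemma phiCD w : phi w = phic w + phid w.
Proof. by rewrite phiE. Qed.

Lemma sum_delta n (x : nat) (F : nat -> rat) : (x < n)%N ->
  \sum_(i < n) ((i : nat) == x)%:R * F i = F x.
Proof.
move=> xn; rewrite (bigD1 (Ordinal xn)) //= eqxx mul1r big1 ?addr0 // => i.
by rewrite -val_eqE /= => /negbTE ->; rewrite mul0r.
Qed.

Lemma phic_Pw x y : phic (Pw x y) = cc (x + y + 1)%N x y.
Proof.
rewrite /phic.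
have E : forall (a b : nat), (Pw x y == Pw a b) = (a == x) && (b == y).
  move=> a b; apply/eqP/andP => [/Pw_inj [-> ->]|[/eqP -> /eqP ->]] //.
have E2 : forall (a b : nat), (Pw x y == Pw a b)%:R * cc (a + b + 1) a b
   = (a == x)%:R * ((b == y)%:R * cc (x + b + 1) x b) :> rat.
  move=> a b; rewrite E; case: eqP => [->|] /=; by rewrite ?mul1r ?mul0r.
under eq_bigr => a _ do under eq_bigr => b _ do rewrite E2.
under eq_bigr => a _ do rewrite -mulr_sumr.
have hx : (x < (size (Pw x y)).+1)%N by rewrite size_Pw; lia.
have hy : (y < (size (Pw x y)).+1)%N by rewrite size_Pw; lia.
rewrite (sum_delta (fun _ => \sum_(i < _) ((i : nat) == y)%:R * cc (x + i + 1) x i)) //.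
by rewrite (sum_delta (fun i => (cc (x + i + 1) x i))).
Qed.

Lemma phic_nP w : (forall a b, w <> Pw a b) -> phic w = 0.
Proof.
move=> H; rewrite /phic big1 // => a _; rewrite big1 // => b _.
by case: eqP => [/H|] //; rewrite mul0r.
Qed.

Lemma Zb_phid r w : (0 < r)%N -> Zb (sc r * phid w) false.
Proof.
move=> r0; rewrite /phid mulr_sumr; apply: Zb_sum => n _.
rewrite mulrCA; apply: Zb_mul_even (Zb_bool _) (Zb_sc2 _ r0).
Qed.

Lemma phic_cases w : (exists x y, w = Pw x y) \/ phic w = 0.
Proof.
case: (Classical_Prop.classic (exists x y, w = Pw x y)) => [h|h]; [by left | right].
by apply: phic_nP => a b E; apply: h; exists a, b.
Qed.

Lemma phi_nil : phi [::] = 0.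
Proof.
rewrite phiCD phic_nP; last by move=> a b /(f_equal size); rewrite size_Pw addn3.
by rewrite /phid /= big_ord1 /= mul0r addr0.
Qed.

Lemma bword_facts n t l : (size t <= n)%N -> levelB t = Some l ->
  [/\ nth x0 t 0 = x0,
      forall i, nth x0 t i = x1 -> (0 < i)%N /\ nth x0 t i.-1 = x0
    & forall i, nth x0 t i = x1 -> nth x0 t i.+1 = x0].
Proof.
elim: n t l => [|n IH] t l.
  by case: t => //= _ [_]; split => // i; rewrite nth_nil.
case: t => [|[] t] /=; first by move=> _ _; split => // i; rewrite nth_nil.
  by [].
case: t => [|[] t] //=.
  move=> Hs Hl; have [H0 H1 H2] := IH t l ltac:(lia) Hl.
  split => //.
    case=> [|[|i]] //= h; have [i0 hi] := H1 _ h; split => //.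
    by case: i i0 hi h.
  by case=> [|[|i]] //= h; apply: H2.
case: t => [|[] t] //= Hs.
case Hl: (levelB t) => [l'|] //= _.
have [H0 H1 H2] := IH t l' ltac:(lia) Hl.
split => //.
  case=> [|[|[|i]]] //= h; have [i0 hi] := H1 _ h; split => //.
  by case: i i0 hi h.
by case=> [|[|[|i]]] //= h; apply: H2.
Qed.

Lemma bword t l : levelB t = Some l ->
  [/\ nth x0 t 0 = x0,
      forall i, nth x0 t i = x1 -> (0 < i)%N /\ nth x0 t i.-1 = x0
    & forall i, nth x0 t i = x1 -> nth x0 t i.+1 = x0].
Proof. exact: bword_facts (leqnn _). Qed.

Lemma levelB_Pw0 x u : levelB (Pw x 0 ++ u) = omap S (levelB u).
Proof. by elim: x => [|x IH] //; rewrite /Pw in IH *; rewrite pow01S /= IH. Qed.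

Lemma bword_decomp n t l : (size t <= n)%N -> levelB t = Some l -> (0 < l)%N ->
  exists2 u, t = Pw (lead t) 0 ++ u & levelB u = Some l.-1.
Proof.
elim: n t l => [|n IH] t l.
  by case: t => //= _ [<-].
case: t => [|[] t] /=; first by move=> _ [<-].
  by [].
case: t => [|[] t] //=.
  move=> Hs Hl l0; have [u E Hu] := IH t l ltac:(lia) Hl l0.
  by exists u => //; rewrite {1}E.
case: t => [|[] t] //= Hs.
case Hl: (levelB t) => [l'|] //= [<-] _.
by exists t.
Qed.

End Part3.
Import Part3.

Module Part4.
Local Open Scope ring_scope.

Definition Ee (t : word) (j : nat) : bool := nth x0 (x1 :: t ++ [:: x0]) j.
Definition Ff (t : word) (r j : nat) : word := take (2 * r + 1)%N (drop j t).
Definition RF (t : word) (r j : nat) : word := take j t ++ drop (j + 2 * r + 1)%N t.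
Definition cf (l : nat) (t : word) (r : nat) (u : word) (j : nat) : rat :=
  ((RF t r j == u) && inB_level (RF t r j) l.-1)%:R.
Definition Gj l t r u j : rat :=
  cf l t r u j * phiI (Ee t j) (Ff t r j) (Ee t (j + 2 * r + 2)%N).
Definition Aj l t r u j : rat :=
  cf l t r u j * ((Ee t j == x1) && (Ee t (j + 2 * r + 2)%N == x0))%:R * phic (Ff t r j).
Definition Bj l t r u j : rat :=
  cf l t r u j * ((Ee t j == x0) && (Ee t (j + 2 * r + 2)%N == x1))%:R
  * ((-1) ^+ size (Ff t r j) * phic (rev (Ff t r j))).

Lemma Ee0 t : Ee t 0 = x1. Proof. by []. Qed.
Lemma EeS t j : Ee t j.+1 = nth x0 t j.
Proof.
rewrite /Ee /= nth_cat; case: ltnP => // h.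
rewrite (nth_default x0 h); case: (j - size t)%N => //= n; by rewrite nth_nil.
Qed.

Lemma dcoefE l r t u : (2 * r + 1 <= size t)%N ->
  dcoef l r t u = \sum_(j < (size t - (2 * r + 1)).+1) Gj l t r u j.
Proof.
move=> h; rewrite /dcoef /=.
rewrite (big_ord_widen_cond (size t).+1 (fun j => true) (fun j => Gj l t r u j)); last by lia.
apply: eq_big => [j|j _]; first by lia.
by [].
Qed.

Lemma Zb_cf l t r u j : exists b, Zb (cf l t r u j) b.
Proof. by eexists; apply: Zb_bool. Qed.

Lemma Zb_R l t r u j : (0 < r)%N -> Zb (sc r * (Gj l t r u j - Aj l t r u j - Bj l t r u j)) false.
Proof.
move=> r0; rewrite /Gj /Aj /Bj /phiI.
have [bc Hc] := Zb_cf l t r u j.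
set c := cf l t r u j; set F := Ff t r j.
case: (Ee t j); case: (Ee t (j + 2 * r + 2)) => /=.
- rewrite phi_nil !(mulr0, mul0r, subr0); exact: Zb0.
- rewrite phiCD.
  have -> : sc r * (c * (phic F + phid F) - c * 1 * phic F - c * 0 * ((-1) ^+ size F * phic (rev F)))
    = c * (sc r * phid F) by ring.
  exact: Zb_mul_even Hc (Zb_phid _ r0).
- rewrite phiCD.
  have -> : sc r * (c * ((-1) ^+ size F * (phic (rev F) + phid (rev F))) - c * 0 * phic F - c * 1 * ((-1) ^+ size F * phic (rev F)))
    = c * (-1) ^+ size F * (sc r * phid (rev F)) by ring.
  exact: Zb_mul_even (Zb_mul Hc (Zb_sign _)) (Zb_phid _ r0).
- rewrite phi_nil !(mulr0, mul0r, subr0); exact: Zb0.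
Qed.

Lemma size_Ff t r j : (j + 2 * r + 1 <= size t)%N -> size (Ff t r j) = (2 * r + 1)%N.
Proof. move=> h; rewrite /Ff size_takel // size_drop; lia. Qed.

Lemma Ff_cons t r i : (i < size t)%N -> Ff t r i = nth x0 t i :: take (2 * r) (drop i.+1 t).
Proof. by move=> h; rewrite /Ff (drop_nth x0 h) addn1. Qed.

Lemma Ff_rcons t r i : (i + 2 * r + 1 < size t)%N ->
  Ff t r i.+1 = rcons (take (2 * r) (drop i.+1 t)) (nth x0 t (i + 2 * r + 1)).
Proof.
move=> h; rewrite /Ff addn1 (take_nth x0); last by rewrite size_drop; lia.
by rewrite nth_drop; congr (rcons _ (nth _ _ _)); lia.
Qed.

Lemma RF_shift t r i : (i + 2 * r + 1 < size t)%N -> nth x0 t i = x1 ->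
  nth x0 t (i + 2 * r + 1) = x1 -> RF t r i = RF t r i.+1.
Proof.
move=> h h1 h2; rewrite /RF (take_nth x0); last by lia.
rewrite (drop_nth x0 h) h1 h2 cat_rcons; do 3 f_equal; lia.
Qed.

Lemma sign_odd r : (-1) ^+ (2 * r + 1)%N = -1 :> rat.
Proof. by rewrite -signr_odd addn1 /= oddM. Qed.

Lemma Zb_pair l t r u i lv : levelB t = Some lv -> (0 < r)%N -> (i + 2 * r + 1 < size t)%N ->
  Zb (sc r * (Aj l t r u i.+1 + Bj l t r u i)) false.
Proof.
move=> Hlv r0 hi.
have [B0 B1 B2] := bword Hlv.
have hi0 : (i < size t)%N by lia.
have EA1 : Ee t i.+1 = nth x0 t i by rewrite EeS.
have EA2 : Ee t (i.+1 + 2 * r + 2) = nth x0 t (i + 2 * r + 2).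
  by rewrite -EeS; congr (Ee t _); lia.
have EB2 : Ee t (i + 2 * r + 2) = nth x0 t (i + 2 * r + 1).
  by rewrite -EeS; congr (Ee t _); lia.
pose H := [/\ nth x0 t i = x1, nth x0 t (i + 2 * r + 2) = x0 & exists x y, Ff t r i.+1 = Pw x y].
case: (Classical_Prop.classic H) => [[h1 h2 [x [y hF]]]|nH].
  have sz : (x + y + 1 = r)%N.
    have := size_Ff (j := i.+1) (r := r) (t := t) ltac:(lia); rewrite hF size_Pw; lia.
  have := Ff_rcons hi; rewrite hF Pw_rcons cats1 => /rcons_inj [hT hL].
  have hFi : Ff t r i = Qw x y by rewrite Ff_cons // h1 -hT -head_Qw.
  have [i0 hp] := B1 _ h1.
  have EB1 : Ee t i = x0 by rewrite -(prednK i0) EeS.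
  have hc : cf l t r u i = cf l t r u i.+1 by rewrite /cf RF_shift.
  rewrite /Aj /Bj EA1 EA2 EB1 EB2 hc h1 h2 -hL hF hFi -rev_Pw revK phic_Pw phic_Pw.
  rewrite size_rev size_Pw (_ : (2 * y + 2 * x + 3) = 2 * r + 1)%N; last by lia.
  rewrite sign_odd /= (addnC y x) sz.
  have [bc Hc] := Zb_cf l t r u i.+1.
  set c := cf l t r u i.+1.
  have -> : sc r * (c * 1 * cc r x y + c * 1 * (-1 * cc r y x)) = c * (sc r * (cc r x y - cc r y x)) by ring.
  exact: Zb_mul_even Hc (Zb_scc_pair sz).
have -> : Aj l t r u i.+1 = 0.
  rewrite /Aj EA1 EA2; case: (phic_cases (Ff t r i.+1)) => [[x [y hF]]|->]; last by rewrite mulr0.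
  case: eqP => h1 /=; last by rewrite mulr0 mul0r.
  case: eqP => h2 /=; last by rewrite mulr0 mul0r.
  by exfalso; apply: nH; split => //; exists x, y.
have -> : Bj l t r u i = 0.
  rewrite /Bj; case: (phic_cases (rev (Ff t r i))) => [[a [b hF]]|->]; last by rewrite !mulr0.
  case: eqP => h1 /=; last by rewrite mulr0 mul0r.
  case: eqP => h2 /=; last by rewrite mulr0 mul0r.
  exfalso; apply: nH.
  have hFi : Ff t r i = Qw b a by rewrite -rev_Pw -hF revK.
  move: hFi; rewrite Ff_cons // head_Qw => -[hn hT].
  rewrite EB2 in h2.
  have hF1 : Ff t r i.+1 = Pw b a by rewrite Ff_rcons // hT h2 -cats1 -Pw_rcons.
  split => //; last by exists b, a.
  have := B2 _ h2; rewrite (_ : (i + 2 * r + 1).+1 = i + 2 * r + 2)%N //; lia.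
by rewrite addr0 mulr0; exact: Zb0.
Qed.

Lemma BK0 l t r u : (2 * r + 1 <= size t)%N -> Bj l t r u (size t - (2 * r + 1)) = 0.
Proof.
move=> h; rewrite /Bj.
have -> : Ee t (size t - (2 * r + 1) + 2 * r + 2) = x0.
  rewrite (_ : (size t - (2 * r + 1) + 2 * r + 2 = (size t).+1)%N); last by lia.
  by rewrite EeS nth_default.
by rewrite andbF mulr0 mul0r.
Qed.

Lemma A0_int l t r u : (0 < r)%N -> (2 * r + 1 <= size t)%N -> exists b, Zb (sc r * Aj l t r u 0) b.
Proof.
move=> r0 h; rewrite /Aj.
case: (phic_cases (Ff t r 0)) => [[x [y hF]]|->]; last by exists false; rewrite !mulr0; exact: Zb0.
have sz : (x + y + 1 = r)%N.
  have := size_Ff (j := 0) (r := r) (t := t) ltac:(lia); rewrite hF size_Pw; lia.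
rewrite hF phic_Pw sz.
have [b Hb] := Zb_scc x y r0.
have [bc Hc] := Zb_cf l t r u 0.
eexists; rewrite mulrCA; apply: Zb_mul (Zb_mul Hc (Zb_bool _)) Hb.
Qed.

Lemma A0_par l t r u : (0 < r)%N -> (2 * r + 1 <= size t)%N -> (r - 1 <= lead t)%N ->
  levelB u = Some l.-1 -> Zb (sc r * Aj l t r u 0) (t == Pw (r - 1) 0 ++ u).
Proof.
move=> r0 h hl hu; case: eqP => [ht|hne].
  have szP : size (Pw (r - 1) 0) = (2 * r + 1)%N by rewrite size_Pw; lia.
  have hF : Ff t r 0 = Pw (r - 1) 0 by rewrite /Ff drop0 ht take_size_cat.
  have hR : RF t r 0 = u by rewrite /RF take0 /= ht add0n drop_size_cat.
  have hc : cf l t r u 0 = 1 by rewrite /cf hR eqxx /inB_level hu eqxx.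
  have [B0 _ _] := bword hu.
  have hE : Ee t (0 + 2 * r + 2) = x0.
    by rewrite (_ : (0 + 2 * r + 2 = (2 * r + 1).+1)%N) ?EeS ?ht ?nth_cat ?szP ?ltnn ?subnn //; lia.
  rewrite /Aj hc hF hE phic_Pw (_ : (r - 1 + 0 + 1 = r)%N); last by lia.
  by rewrite /= !mul1r; apply: Zb_scc_diag.
have -> : Aj l t r u 0 = 0.
  rewrite /Aj; case: (phic_cases (Ff t r 0)) => [[x [y hF]]|->]; last by rewrite mulr0.
  rewrite /cf; case: eqP => hR /=; last by rewrite !mul0r.
  exfalso; apply: hne.
  have sz : (x + y + 1 = r)%N.
    have := size_Ff (j := 0) (r := r) (t := t) ltac:(lia); rewrite hF size_Pw; lia.
  have ht : t = Pw x y ++ u.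
    by rewrite -hR /RF take0 /= -hF /Ff drop0 add0n cat_take_drop.
  have hx : x = lead t by rewrite ht lead_Pw.
  have hy : y = 0%N by lia.
  by rewrite ht hy (_ : x = r - 1)%N //; lia.
by rewrite mulr0; exact: Zb0.
Qed.

Lemma local_even l t r u lv : levelB t = Some lv -> (0 < r)%N -> (2 * r + 1 <= size t)%N ->
  Zb (sc r * dcoef l r t u - sc r * Aj l t r u 0) false.
Proof.
move=> Hlv r0 h; rewrite dcoefE //.
set K := (size t - (2 * r + 1))%N.
have E : \sum_(j < K.+1) Gj l t r u j =
   \sum_(j < K.+1) Aj l t r u j + \sum_(j < K.+1) Bj l t r u j
   + \sum_(j < K.+1) (Gj l t r u j - Aj l t r u j - Bj l t r u j).
  rewrite -!big_split /=; apply: eq_bigr => j _; ring.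
rewrite E big_ord_recl big_ord_recr /=.
rewrite (_ : Bj l t r u K = 0); last exact: BK0.
rewrite (_ : \sum_(i < K) Aj l t r u (lift ord0 i) = \sum_(i < K) Aj l t r u i.+1); last first.
  by apply: eq_bigr.
have -> : sc r * (Aj l t r u 0 + \sum_(i < K) Aj l t r u i.+1 +
      (\sum_(i < K) Bj l t r u i + 0) +
      \sum_(j < K.+1) (Gj l t r u j - Aj l t r u j - Bj l t r u j)) - sc r * Aj l t r u 0
  = \sum_(i < K) sc r * (Aj l t r u i.+1 + Bj l t r u i) +
    \sum_(j < K.+1) sc r * (Gj l t r u j - Aj l t r u j - Bj l t r u j).
  rewrite -!mulr_sumr.
  rewrite [\sum_(i < K) (_ + _)]big_split /=; ring.
apply: (@Zb_add _ _ false false); apply: Zb_sum => j _.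
  by apply: Zb_pair Hlv r0 _; rewrite /K in j *; case: j => j /=; lia.
exact: Zb_R.
Qed.

Lemma local_int l t r u lv : levelB t = Some lv -> (0 < r)%N -> (2 * r + 1 <= size t)%N ->
  exists b, Zb (sc r * dcoef l r t u) b.
Proof.
move=> Hlv r0 h; have [b Hb] := A0_int l u r0 h.
exists (false (+) b); rewrite -(subrK (sc r * Aj l t r u 0) (sc r * dcoef l r t u)).
exact: Zb_add (local_even l u Hlv r0 h) Hb.
Qed.

Lemma local_par l t r u lv : levelB t = Some lv -> (0 < r)%N -> (2 * r + 1 <= size t)%N ->
  (r - 1 <= lead t)%N -> levelB u = Some l.-1 ->
  Zb (sc r * dcoef l r t u) (t == Pw (r - 1) 0 ++ u).
Proof.
move=> Hlv r0 h hl hu.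
have := Zb_add (local_even l u Hlv r0 h) (A0_par r0 h hl hu).
by rewrite subrK.
Qed.

End Part4.
Import Part4.

Module Part5.
Local Open Scope ring_scope.

Definition isInt (x : rat) := exists m : int, x = m%:~R.
Definition oddv (x : rat) : bool := odd `|numq x|%N.

Lemma oddv0 : oddv 0 = false. Proof. by []. Qed.

Lemma Zb_int (m : int) : Zb m%:~R (odd `|m|%N).
Proof.
case: m => n; first exact: Zb_nat.
by rewrite NegzE rmorphN /=; apply: Zb_opp; exact: Zb_nat.
Qed.

Lemma Zb_isInt x : isInt x -> Zb x (oddv x).
Proof. by case=> m ->; rewrite /oddv numq_int; exact: Zb_int. Qed.

Lemma dphi_scale N l c (v : word -> rat) r u :
  dphi N l (fun w => c * v w) r u = c * dphi N l v r u.
Proof.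
rewrite /dphi; case: ifP => _; last by rewrite mulr0.
by rewrite mulr_sumr; apply: eq_bigr => t _; rewrite mulrA.
Qed.

Lemma dphi_sub N l (v1 v2 : word -> rat) r u :
  dphi N l (fun w => v1 w - v2 w) r u = dphi N l v1 r u - dphi N l v2 r u.
Proof.
rewrite /dphi; case: ifP => _; last by rewrite subr0.
by rewrite -sumrB; apply: eq_bigr => t _; rewrite mulrBl.
Qed.

Lemma key_even N l (v : word -> rat) : (1 <= l)%N -> in_gr N l v ->
  (forall r u, dphi N l v r u = 0) -> (forall w, isInt (v w)) ->
  forall w, Zb (v w) false.
Proof.
move=> l1 Hgr Hker Hint w0.
case: (Classical_Prop.classic (exists w, oddv (v w))) => [ex|nex]; last first.
  case o: (oddv (v w0)); last by have := Zb_isInt (Hint w0); rewrite o.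
  by exfalso; apply: nex; exists w0; rewrite o.
exfalso.
have exP : exists n, [exists t : N.-tuple bool, (lead t == n) && oddv (v t)].
  case: ex => w hw; exists (lead w).
  have : v w != 0 by apply: contraTneq hw => ->; rewrite oddv0.
  move=> /Hgr [sz _]; apply/existsP; exists (Tuple (introT eqP sz)) => /=.
  by rewrite eqxx hw.
case: (ex_minnP exP) => n /existsP [ts /andP [/eqP hl hodd]] hmin.
set t := val ts.
have hlt : lead t = n := hl.
have vt0 : v t != 0 by apply: contraTneq hodd => ->; rewrite oddv0.
have [szt lvt] := Hgr _ vt0.
move/eqP: lvt => lvt.
have [u ht hu] := bword_decomp (leqnn _) lvt l1.
set r := n.+1.
have r0 : (0 < r)%N by [].
have szr : (2 * r + 1 <= N)%N.
  rewrite -szt ht size_cat size_Pw hlt /r; lia.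
have := Hker r u; rewrite /dphi r0 szr /= => S0.
have : Zb (sc r * \sum_(t0 : N.-tuple bool) v t0 * dcoef l r t0 u) true.
  rewrite mulr_sumr (bigD1 ts) //=.
  rewrite -[true]/(true (+) false); apply: Zb_add.
    rewrite mulrCA -[true]/(true && true); apply: Zb_mul.
      by have := Zb_isInt (Hint t); rewrite hodd.
    have := local_par (l := l) (t := t) (r := r) (u := u) lvt r0 ltac:(by rewrite szt) ltac:(rewrite hlt /r; lia) hu.
    have -> : (t == Pw (r - 1) 0 ++ u) = true by apply/eqP; rewrite {1}ht hlt /r subn1.
    by [].
  apply: Zb_sum => t1 ht1.
  case: (eqVneq (v t1) 0) => [->|vt1]; first by rewrite mul0r mulr0; exact: Zb0.
  have [szt1 lvt1] := Hgr _ vt1.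
  move/eqP: lvt1 => lvt1.
  rewrite mulrCA.
  case od: (oddv (v t1)).
    have hl1 : (n <= lead t1)%N by apply: hmin; apply/existsP; exists t1; rewrite eqxx od.
    have := local_par (l := l) (t := t1) (r := r) (u := u) lvt1 r0 ltac:(by rewrite szt1) ltac:(lia) hu.
    have -> : (val t1 == Pw (r - 1) 0 ++ u) = false.
      apply/negbTE; apply: contra ht1 => /eqP e.
      by apply/eqP/val_inj; rewrite /= e /r subn1 /= -hl -ht.
    by move=> h; apply: Zb_mul_even (Zb_isInt (Hint _)) h.
  have [b hb] := local_int l u lvt1 r0 ltac:(by rewrite szt1).
  have := Zb_isInt (Hint t1); rewrite od => h.
  by apply: Zb_even_mul h hb.
by rewrite S0 mulr0 => /(Zb_uniq Zb0).
Qed.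

Lemma isInt_even x : isInt x -> Zb x false -> exists m : int, x = 2 * m%:~R.
Proof.
move=> hi hz; have := Zb_uniq hz (Zb_isInt hi); case: hi => m -> /esym.
rewrite /oddv numq_int; case: m => n /= ho.
  exists (n./2)%:Z; rewrite -[in LHS](odd_double_half n) ho add0n -muln2.
  by rewrite (_ : (2:rat) = (2%:Z)%:~R) // -intrM; congr (_ %:~R); lia.
exists (- (n.+1./2)%:Z); rewrite NegzE.
have := odd_double_half n.+1; rewrite /= ho add0n -muln2 => e.
rewrite (_ : (2:rat) = (2%:Z)%:~R) // -intrM; congr (_ %:~R); lia.
Qed.

Lemma kernel_pow N l : (1 <= l)%N -> forall k (v : word -> rat), in_gr N l v ->
  (forall r u, dphi N l v r u = 0) -> (forall w, isInt (v w)) ->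
  forall w, exists m : int, v w = 2 ^+ k * m%:~R.
Proof.
move=> l1; elim=> [|k IH] v Hgr Hker Hint w.
  by case: (Hint w) => m ->; exists m; rewrite expr0 mul1r.
pose v' := fun w => 2^-1 * v w.
have Hgr' : in_gr N l v'.
  move=> w' h; apply: Hgr; apply: contraNneq h; rewrite /v' /= => ->; by rewrite mulr0.
have Hker' : forall r u, dphi N l v' r u = 0 by move=> r u; rewrite dphi_scale Hker mulr0.
have Hint' : forall w, isInt (v' w).
  move=> w'; rewrite /v' /=; have [m ->] := isInt_even (Hint w') (key_even l1 Hgr Hker Hint w').
  by exists m; rewrite mulrA mulVf ?mul1r.
have [m hm] := IH v' Hgr' Hker' Hint' w.
exists m; rewrite exprS -mulrA -hm /v' mulrA mulfV ?mul1r //.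
Qed.

Lemma kernel_int N l (v : word -> rat) : (1 <= l)%N -> in_gr N l v ->
  (forall r u, dphi N l v r u = 0) -> (forall w, isInt (v w)) -> forall w, v w = 0.
Proof.
move=> l1 Hgr Hker Hint w.
have [m0 h0] := Hint w.
have [m hm] := kernel_pow l1 `|m0|%N Hgr Hker Hint w.
rewrite h0 in hm *.
have : m0 = (2 ^+ `|m0|%N * m)%R.
  apply/eqP; rewrite -(eqr_int rat) hm rmorphM rmorphXn /=; done.
move=> E; apply/eqP; rewrite intr_eq0; apply/eqP.
case: (eqVneq m 0) => [m0'|mn0]; first by rewrite E m0' mulr0.
exfalso.
have : (`|m0| = 2 ^ `|m0| * `|m|)%N by rewrite {1}E abszM abszX.
have h1 : (0 < `|m|)%N by rewrite absz_gt0.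
have h2 := ltn_expl `|m0|%N (ltnSn 1).
move=> e; have : (2 ^ `|m0| <= `|m0|)%N by rewrite {2}e leq_pmulr.
by rewrite leqNgt h2.
Qed.

Lemma kernel_zero N l (v : word -> rat) : (1 <= l)%N -> in_gr N l v ->
  (forall r u, dphi N l v r u = 0) -> forall w, v w = 0.
Proof.
move=> l1 Hgr Hker.
pose D : rat := \prod_(t : N.-tuple bool) (denq (v t))%:~R.
have D0 : D != 0.
  by apply/prodf_neq0 => t _; rewrite intr_eq0 denq_neq0.
pose v' := fun w => D * v w.
have Hgr' : in_gr N l v'.
  move=> w' h; apply: Hgr; apply: contraNneq h; rewrite /v' /= => ->; by rewrite mulr0.
have Hker' : forall r u, dphi N l v' r u = 0 by move=> r u; rewrite dphi_scale Hker mulr0.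
have Hint' : forall w, isInt (v' w).
  move=> w; rewrite /v' /=.
  case: (eqVneq (v w) 0) => [->|vw]; first by exists 0; rewrite mulr0.
  have [sz _] := Hgr _ vw.
  pose t : N.-tuple bool := Tuple (introT eqP sz).
  have -> : w = val t by [].
  exists (numq (v t) * \prod_(t' | t' != t) denq (v t')).
  rewrite /D (bigD1 t) //= rmorphM /= numqE rmorph_prod /=; ring.
move=> w; have := kernel_int l1 Hgr' Hker' Hint' w.
by rewrite /v' /= => /eqP; rewrite mulf_eq0 (negbTE D0) => /eqP.
Qed.

End Part5.
Import Part5.

Module Part6.
Local Open Scope ring_scope.

Lemma size_RF t r j : (j + 2 * r + 1 <= size t)%N -> size (RF t r j) = (size t - (2 * r + 1))%N.
Proof. move=> h; rewrite /RF size_cat size_takel ?size_drop; lia. Qed.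

Lemma dcoef_supp l r t u : dcoef l r t u != 0 ->
  levelB u = Some l.-1 /\ size u = (size t - (2 * r + 1))%N.
Proof.
case: (Classical_Prop.classic (levelB u = Some l.-1 /\ size u = (size t - (2 * r + 1))%N)) => // hn.
rewrite /dcoef big1 ?eqxx // => j hj.
case: eqP => [hR|]; last by rewrite mul0r.
rewrite /inB_level; case: eqP => [hl|]; last by rewrite mul0r.
exfalso; apply: hn; rewrite -hR; split => //.
have := size_RF (t := t) (r := r) (j := j) hj; by rewrite /RF.
Qed.

Lemma sum_tuple_delta N (w : word) (F : word -> rat) : size w = N ->
  \sum_(t : N.-tuple bool) (val t == w)%:R * F (val t) = F w.
Proof.
move=> sz; pose t0 : N.-tuple bool := Tuple (introT eqP sz).
rewrite (bigD1 t0) //= eqxx mul1r big1 ?addr0 // => t ht.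
case: eqP => [e|]; last by rewrite mul0r.
by exfalso; move/eqP: ht; apply; apply: val_inj; rewrite /= e.
Qed.

Section Surj.
Variables (N l : nat).
Hypothesis l1 : (1 <= l)%N.

Definition ST := {t : N.-tuple bool | inB_level t l}.
Definition nS := #|{: ST}|.
Definition ww (j : 'I_nS) : word := val (val (enum_val j)).

Lemma ww_inj : injective ww.
Proof. by move=> i j /val_inj /val_inj /enum_val_inj. Qed.

Lemma ww_prop j : size (ww j) = N /\ levelB (ww j) = Some l.
Proof.
rewrite /ww; case: (enum_val j) => t /= /eqP h; split => //; exact: size_tuple.
Qed.

Lemma ww_surj w : size w = N -> levelB w = Some l -> exists j, ww j = w.
Proof.
move=> sz lv; pose t : N.-tuple bool := Tuple (introT eqP sz).
have ht : inB_level t l by rewrite /inB_level /= lv.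
pose s : ST := exist _ t ht.
by exists (enum_rank s); rewrite /ww enum_rankK.
Qed.

Definition vx (x : 'rV[rat]_nS) (w : word) : rat := \sum_(j < nS) (w == ww j)%:R * x 0 j.

Lemma vx_ww x j : vx x (ww j) = x 0 j.
Proof.
rewrite /vx (bigD1 j) //= eqxx mul1r big1 ?addr0 // => i hi.
by rewrite (inj_eq ww_inj) eq_sym (negbTE hi) mul0r.
Qed.

Lemma in_gr_vx x : in_gr N l (vx x).
Proof.
move=> w h.
case: (Classical_Prop.classic (exists j, w = ww j)) => [[j ->]|hn].
  by have [? ?] := ww_prop j; split => //; rewrite /inB_level; apply/eqP.
exfalso; move/eqP: h; apply; rewrite /vx big1 // => j _.
by case: eqP => [e|]; [exfalso; apply: hn; exists j | rewrite mul0r].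
Qed.

Lemma dphi_vx x r u : (1 <= r)%N -> (2 * r + 1 <= N)%N ->
  dphi N l (vx x) r u = \sum_(j < nS) x 0 j * dcoef l r (ww j) u.
Proof.
move=> r1 hr; rewrite /dphi r1 hr /=.
under eq_bigr => t _ do rewrite /vx mulr_suml.
rewrite exchange_big /=; apply: eq_bigr => j _.
have := sum_tuple_delta (fun w => x 0 j * dcoef l r w u) (proj1 (ww_prop j)).
move=> <-; apply: eq_bigr => t _; ring.
Qed.

Definition rr (i : 'I_nS) : nat := (lead (ww i)).+1.
Definition uu (i : 'I_nS) : word := drop (2 * rr i + 1) (ww i).

Lemma rr_uu i : (2 * rr i + 1 <= N)%N /\ ww i = Pw (rr i - 1) 0 ++ uu i /\ levelB (uu i) = Some l.-1.
Proof.
have [sz lv] := ww_prop i.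
have [u hu hl] := bword_decomp (leqnn _) lv l1.
have hs : size (Pw (lead (ww i)) 0) = (2 * rr i + 1)%N by rewrite size_Pw /rr; lia.
have hU : uu i = u by rewrite /uu {1}hu drop_size_cat.
split; first by rewrite -sz hu size_cat hs; lia.
by rewrite hU /rr subn1 /=; split.
Qed.

Lemma ww_of r u : (1 <= r)%N -> levelB u = Some l.-1 -> size u = (N - (2 * r + 1))%N ->
  (2 * r + 1 <= N)%N -> exists i, rr i = r /\ uu i = u.
Proof.
move=> r1 hu sz hr.
have lv : levelB (Pw (r - 1) 0 ++ u) = Some l by rewrite levelB_Pw0 hu /=; congr Some; lia.
have hs : size (Pw (r - 1) 0 ++ u) = N by rewrite size_cat size_Pw sz; lia.
have [i hi] := ww_surj hs lv.
have hr' : rr i = r by rewrite /rr hi lead_Pw; lia.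
exists i; split => //.
rewrite /uu hi hr' drop_size_cat // size_Pw; lia.
Qed.

Definition Amx : 'M[rat]_nS := \matrix_(j, i) dcoef l (rr i) (ww j) (uu i).

Lemma mulA_dphi x i : (x *m Amx) 0 i = dphi N l (vx x) (rr i) (uu i).
Proof.
have [hr _] := rr_uu i.
rewrite dphi_vx // !mxE; apply: eq_bigr => j _; by rewrite mxE.
Qed.

Lemma dphi_vx_zero x r u : ~ (levelB u = Some l.-1 /\ size u = (N - (2 * r + 1))%N) ->
  dphi N l (vx x) r u = 0.
Proof.
move=> hn; rewrite /dphi; case: ifP => // _.
rewrite big1 // => t _.
case: (eqVneq (dcoef l r t u) 0) => [->|h]; first by rewrite mulr0.
by exfalso; apply: hn; have := dcoef_supp h; rewrite size_tuple.
Qed.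

Lemma Amx_inj (x : 'rV[rat]_nS) : x *m Amx = 0 -> x = 0.
Proof.
move=> hx.
have Hker : forall r u, dphi N l (vx x) r u = 0.
  move=> r u.
  case: (Classical_Prop.classic (levelB u = Some l.-1 /\ size u = (N - (2 * r + 1))%N)) => [[hu sz]|hn];
    last exact: dphi_vx_zero.
  rewrite /dphi; case: ifP => // /andP [r1 hr].
  have [i [hri hui]] := ww_of r1 hu sz hr.
  have := mulA_dphi x i; rewrite hx mxE hri hui /dphi r1 hr /= => <-; done.
have := kernel_zero l1 (@in_gr_vx x) Hker.
move=> h; apply/matrixP => a j; rewrite (ord1 a) -vx_ww h mxE //.
Qed.

Lemma Amx_unit : Amx \in unitmx.
Proof.
rewrite -row_free_unit -kermx_eq0 -submx0; apply/rV_subP => v /sub_kermxP hv.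
by rewrite (Amx_inj hv) sub0mx.
Qed.

End Surj.

End Part6.
Import Part6.

Module Part7.
Local Open Scope ring_scope.

Lemma main_aux (N l : nat) :
  (1 <= N)%N -> (1 <= l)%N -> bij_on (in_gr N l) (in_target N l) (dphi N l).
Proof.
move=> N1 l1; split.
- move=> v Hv r u h.
  move: h; rewrite /dphi; case: ifP => [/andP [r1 hr]|]; last by rewrite eqxx.
  move=> h.
  have [t ht] : exists t : N.-tuple bool, (v t * dcoef l r t u != 0)%R.
    case: (Classical_Prop.classic (exists t : N.-tuple bool, (v t * dcoef l r t u != 0)%R)) => // hn.
    exfalso; move/eqP: h; apply; rewrite big1 // => t _.
    by apply/eqP; apply: contraT => ht; exfalso; apply: hn; exists t.
  rewrite GRing.mulf_eq0 negb_or in ht; case/andP: ht => hv hd.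
  have [hu sz] := dcoef_supp hd.
  by split => //; [rewrite sz size_tuple | rewrite /inB_level hu].
- move=> v1 v2 H1 H2 E.
  apply: FunctionalExtensionality.functional_extensionality => w.
  have Hgr : in_gr N l (fun w => (v1 w - v2 w)%R).
    move=> w' h; case: (eqVneq (v1 w') 0%R) => [e|h1]; last exact: H1.
    by apply: H2; move: h; rewrite e GRing.sub0r GRing.oppr_eq0.
  have Hker : forall r u, dphi N l (fun w => (v1 w - v2 w)%R) r u = 0%R.
    by move=> r u; rewrite dphi_sub E GRing.subrr.
  by apply/eqP; rewrite -GRing.subr_eq0; apply/eqP; apply: kernel_zero l1 Hgr Hker w.
- move=> g Hg.
  pose y : 'rV[rat]_(nS N l) := \row_i g (rr i) (uu i).
  pose x := y *m invmx (Amx N l).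
  exists (vx x); first exact: in_gr_vx.
  have hx : x *m Amx N l = y by rewrite /x mulmxKV // Amx_unit.
  apply: FunctionalExtensionality.functional_extensionality => r.
  apply: FunctionalExtensionality.functional_extensionality => u.
  case: (Classical_Prop.classic (((1 <= r)%N && (2 * r + 1 <= N)%N) /\
      levelB u = Some l.-1 /\ size u = (N - (2 * r + 1))%N)) => [[/andP [r1 hr] [hu sz]]|hn].
    have [i [hri hui]] := ww_of l1 r1 hu sz hr.
    have := mulA_dphi l1 x i; rewrite hx mxE hri hui => <-.
    done.
  have -> : g r u = 0%R.
    apply/eqP; apply: contraT => hg; exfalso; apply: hn.
    case: (Hg r u hg) => r1 hr sz hu; split; first by rewrite r1 hr.
    by split => //; apply/eqP.
  rewrite /dphi; case: ifP => hr //.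
  rewrite big1 // => t _.
  case: (eqVneq (dcoef l r t u) 0%R) => [->|h]; first by rewrite GRing.mulr0.
  exfalso; apply: hn; split => //.
  by have := dcoef_supp h; rewrite size_tuple.
Qed.

End Part7.
Import Part7.

Theorem mainTheorem17 (N l : nat) :
  (1 <= N)%N -> (1 <= l)%N -> bij_on (in_gr N l) (in_target N l) (dphi N l).
Proof. exact: main_aux. Qed.
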